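(* Let $h_1,h_2$ be half-spaces of a finite dimensional CAT(0) cube complex with $h_1\subsetneq h_2^*$. Then $\beta(h_1,h_2)$ is consistent (i.e. $\beta\cap\beta^*=\varnothing$, and $h\in\beta$, $h\subset k$ imply $k\in\beta$) and satisfies the descending chain condition (every descending chain in $\beta(h_1,h_2)$ is eventually constant).
   Context: $X$ is a finite-dimensional CAT(0) cube complex identified with its vertex set, $\mathfrak H$ its set of half-spaces, $h^*=X\setminus h$, $\mathfrak s^*=\{h^*:h\in\mathfrak s\}$. Half-spaces $h,k$ are transverse ($h\pitchfork k$) if $h\cap k,h\cap k^*,h^*\cap k,h^*\cap k^*$ are all nonempty. Write $\hat a\subset b$ if $a\subsetneq b$ or $a^*\subsetneq b$. For $h_1\subsetneq h_2^*$, $\beta(h_1,h_2)$ is the set of $h\in\mathfrak H$ satisfying one of: (1) $\hat h_1\subset h$ and $h\pitchfork h_2$; (2) $\hat h_2\subset h$ and $h\pitchfork h_1$; (3) $\hat h_1\subset h$ and $\hat h_2\subset h$. *)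

(* Defs.v *)
(* A CAT(0) cube complex X is identified with its vertex set;
   its 1-skeleton is a (connected) median graph, and conversely every median
   graph is the 1-skeleton of a unique CAT(0) cube complex (Chepoi, Roller).
   We therefore model X as a median graph (V, adj).  Half-spaces are vertex
   sets: the half-space of the hyperplane dual to an edge uv containing u is
   { x | d(x,u) < d(x,v) }. *)
From Stdlib Require Import Arith List.
Import ListNotations.

Definition vset (V : Type) := V -> Prop.

Section Cube.
Context {V : Type} (adj : V -> V -> Prop).

Inductive walk : V -> V -> nat -> Prop :=
| walk_nil x : walk x x 0
| walk_cons x y z n : adj x y -> walk y z n -> walk x z (S n).

Definition dist (x y : V) (n : nat) : Prop :=
  walk x y n /\ forall m, walk x y m -> n <= m.

Definition interval (x y m : V) : Prop :=
  exists a b, dist x m a /\ dist m y b /\ dist x y (a + b).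

Definition median_graph : Prop :=
  (forall x y, adj x y -> adj y x) /\
  (forall x, ~ adj x x) /\
  (forall x y, exists n, walk x y n) /\
  (forall x y z, exists m, (interval x y m /\ interval y z m /\ interval x z m) /\
     forall m', interval x y m' /\ interval y z m' /\ interval x z m' -> m' = m).


Definition compl (h : vset V) : vset V := fun x => ~ h x.
Definition subset (a b : vset V) : Prop := forall x, a x -> b x.
Definition ssubset (a b : vset V) : Prop := subset a b /\ ~ subset b a.
Definition seteq (a b : vset V) : Prop := forall x, a x <-> b x.
Definition nonempty (a : vset V) : Prop := exists x, a x.

Definition halfspace (h : vset V) : Prop :=
  exists u v, adj u v /\
    forall x, h x <-> exists du dv, dist x u du /\ dist x v dv /\ du < dv.

Definition transverse (h k : vset V) : Prop :=
  nonempty (fun x => h x /\ k x) /\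
  nonempty (fun x => h x /\ compl k x) /\
  nonempty (fun x => compl h x /\ k x) /\
  nonempty (fun x => compl h x /\ compl k x).

(* finite dimension: bounded size of families of pairwise transverse
   half-spaces (= bounded dimension of cubes) *)
Definition finite_dimensional : Prop :=
  exists N, forall s : list (vset V),
    (forall h, In h s -> halfspace h) -> ForallOrdPairs transverse s ->
    length s <= N.

Definition hat_sub (a b : vset V) : Prop := ssubset a b \/ ssubset (compl a) b.

Definition beta (h1 h2 : vset V) (h : vset V) : Prop :=
  halfspace h /\
  ((hat_sub h1 h /\ transverse h h2) \/
   (hat_sub h2 h /\ transverse h h1) \/
   (hat_sub h1 h /\ hat_sub h2 h)).

Definition consistent (b : vset V -> Prop) : Prop :=
  (forall h, b h -> ~ b (compl h)) /\
  (forall h k, b h -> halfspace k -> subset h k -> b k).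

Definition dcc (b : vset V -> Prop) : Prop :=
  forall f : nat -> vset V, (forall n, b (f n)) ->
    (forall n, subset (f (S n)) (f n)) ->
    exists N, forall n, N <= n -> seteq (f n) (f N).
End Cube.

(* Main.v *)
Require Import Defs.
From Stdlib Require Import Arith List Lia Classical ClassicalEpsilon.

Lemma min_exists (P : nat -> Prop) :
  (exists n, P n) -> exists n, P n /\ forall m, P m -> n <= m.
Proof.
  intros [n Hn]. revert Hn. induction n as [n IH] using lt_wf_ind. intros Hn.
  destruct (classic (exists m, m < n /\ P m)) as [[m [Hm1 Hm2]]|Hno].
  - exact (IH m Hm1 Hm2).
  - exists n. split; auto. intros m Hm. destruct (le_lt_dec n m); auto.
    exfalso; apply Hno; eauto.
Qed.

Definition D {V} (adj : V -> V -> Prop) (x y : V) : nat :=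
  epsilon (inhabits 0) (fun n => dist adj x y n).

Lemma walk_app {V} (adj : V->V->Prop) x y z n m :
  walk adj x y n -> walk adj y z m -> walk adj x z (n+m).
Proof.
  induction 1; intros; simpl; [assumption|]. econstructor; eauto.
Qed.

Lemma walk_inv0 {V} (adj : V->V->Prop) x y : walk adj x y 0 -> x = y.
Proof. intros H; inversion H; subst; auto. Qed.

Lemma walk_invS {V} (adj : V->V->Prop) x y n : walk adj x y (S n) ->
  exists z, adj x z /\ walk adj z y n.
Proof. intros H; inversion H; subst; eauto. Qed.

Section G.
Context {V : Type} (adj : V -> V -> Prop) (HX : median_graph adj).

Lemma Hsym : forall x y, adj x y -> adj y x.
Proof. apply HX. Qed.
Lemma Hirr : forall x, ~ adj x x.
Proof. apply HX. Qed.
Lemma Hconn : forall x y, exists n, walk adj x y n.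
Proof. apply HX. Qed.
Lemma Hmed : forall x y z, exists m, (interval adj x y m /\ interval adj y z m /\ interval adj x z m) /\
     forall m', interval adj x y m' /\ interval adj y z m' /\ interval adj x z m' -> m' = m.
Proof. apply HX. Qed.

Lemma walk_rev x y n : walk adj x y n -> walk adj y x n.
Proof.
  induction 1. constructor.
  replace (S n) with (n+1) by lia. eapply walk_app; eauto.
  econstructor. apply Hsym; eauto. constructor.
Qed.

Lemma dist_D x y : dist adj x y (D adj x y).
Proof. unfold D. apply epsilon_spec. apply min_exists. apply Hconn. Qed.

Lemma Dw x y n : walk adj x y n -> D adj x y <= n.
Proof. apply dist_D. Qed.
Lemma Dwalk x y : walk adj x y (D adj x y).
Proof. apply dist_D. Qed.
Lemma D_of_dist x y n : dist adj x y n -> D adj x y = n.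
Proof.
  intros [H1 H2]. pose proof (Dw _ _ _ H1). pose proof (H2 _ (Dwalk x y)). lia.
Qed.
Lemma D_tri x y z : D adj x z <= D adj x y + D adj y z.
Proof. apply Dw. apply walk_app with y; apply Dwalk. Qed.
Lemma D_sym x y : D adj x y = D adj y x.
Proof.
  pose proof (Dw _ _ _ (walk_rev _ _ _ (Dwalk x y))).
  pose proof (Dw _ _ _ (walk_rev _ _ _ (Dwalk y x))). lia.
Qed.
Lemma D_0 x y : D adj x y = 0 -> x = y.
Proof. intros H. pose proof (Dwalk x y) as W. rewrite H in W. apply walk_inv0 in W; auto. Qed.
Lemma D_refl x : D adj x x = 0.
Proof. pose proof (Dw _ _ _ (walk_nil adj x)). lia. Qed.
Lemma D_adj x y : adj x y -> D adj x y = 1.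
Proof.
  intros H. assert (D adj x y <= 1) by (apply Dw; econstructor; eauto; constructor).
  destruct (D adj x y) eqn:E; [|lia]. apply D_0 in E; subst. exfalso; eapply Hirr; eauto.
Qed.
Lemma D_1 x y : D adj x y = 1 -> adj x y.
Proof.
  intros H. pose proof (Dwalk x y) as W. rewrite H in W.
  apply walk_invS in W as [z [H1 H2]]. apply walk_inv0 in H2; subst; auto.
Qed.
Lemma D_step x y n : D adj x y = S n -> exists z, adj x z /\ D adj z y = n.
Proof.
  intros H. pose proof (Dwalk x y) as W. rewrite H in W.
  apply walk_invS in W as [z [H1 H2]]. exists z; split; auto.
  pose proof (Dw _ _ _ H2). pose proof (D_tri x z y). pose proof (D_adj _ _ H1). lia.
Qed.

Lemma int_iff x y m : interval adj x y m <-> D adj x m + D adj m y = D adj x y.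
Proof.
  split.
  - intros [a [b [H1 [H2 H3]]]]. apply D_of_dist in H1, H2, H3. lia.
  - intros H. exists (D adj x m), (D adj m y). split; [apply dist_D|]. split; [apply dist_D|].
    rewrite H; apply dist_D.
Qed.

Lemma E x y z : adj x y -> D adj z x <> D adj z y.
Proof.
  intros Hxy. destruct (Hmed x y z) as [m [[I1 [I2 I3]] _]].
  apply int_iff in I1, I2, I3. pose proof (D_adj _ _ Hxy).
  pose proof (D_sym z x). pose proof (D_sym z y). pose proof (D_sym x y).
  destruct (D adj x m) eqn:E1.
  - apply D_0 in E1; subst. lia.
  - assert (D adj m y = 0) by lia. apply D_0 in H3. subst. lia.
Qed.

Lemma E2 x y z : adj x y -> D adj z y = D adj z x + 1 \/ D adj z x = D adj z y + 1.
Proof.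
  intros H. pose proof (E _ _ z H). pose proof (D_tri z x y). pose proof (D_tri z y x).
  pose proof (D_adj _ _ H). pose proof (D_adj _ _ (Hsym _ _ H)). lia.
Qed.

Lemma tri_free p r q : adj p r -> adj r q -> ~ adj p q.
Proof.
  intros H1 H2 H3. apply (E _ _ r H3).
  rewrite (D_sym r p), D_adj, D_adj; auto.
Qed.

Lemma D2 p r q : adj p r -> adj r q -> p <> q -> D adj p q = 2.
Proof.
  intros H1 H2 H3. pose proof (D_tri p r q). rewrite (D_adj _ _ H1), (D_adj _ _ H2) in H.
  revert H. destruct (D adj p q) as [|[|[|]]] eqn:Ee; intros; try lia.
  - apply D_0 in Ee; congruence.
  - apply D_1 in Ee. exfalso; exact (tri_free p r q H1 H2 Ee).
Qed.

Lemma quad w a b c k : D adj w a = k -> D adj w b = k -> adj a c -> adj b c ->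
  D adj w c = S k -> a <> b -> exists e, adj a e /\ adj b e /\ D adj w e + 1 = k.
Proof.
  intros Ha Hb Hac Hbc Hc Hab. destruct (Hmed w a b) as [m [[I1 [I2 I3]] _]].
  apply int_iff in I1, I2, I3.
  assert (D adj a b = 2) by (apply D2 with c; auto; apply Hsym; auto).
  pose proof (D_sym a m). 
  assert (D adj m a = 1) by lia. assert (D adj m b = 1) by lia.
  exists m. split; [apply Hsym, D_1; auto|]. split; [apply Hsym, D_1; auto|]. lia.
Qed.

Lemma square a a' b' b : adj a a' -> adj a' b' -> adj b' b -> adj b a -> a <> b' -> a' <> b ->
  forall y, D adj y a' < D adj y b' -> D adj y a < D adj y b.
Proof.
  intros H1 H2 H3 H4 N1 N2 y Hy.
  destruct (le_lt_dec (D adj y b) (D adj y a)) as [Hc|Hc]; [|auto]. exfalso.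
  pose proof (E2 _ _ y H1). pose proof (E2 _ _ y H2). pose proof (E2 _ _ y H3). pose proof (E2 _ _ y H4).
  assert (Ha : D adj y a = S (D adj y a')) by lia.
  assert (Hb : D adj y b = D adj y a') by lia.
  destruct (quad y a' b a (D adj y a') eq_refl Hb (Hsym _ _ H1) H4 Ha N2) as [c0 [Hc1 [Hc2 Hc3]]].
  destruct (Hmed a b' c0) as [m [_ U]].
  assert (Nac : a <> c0) by (intro; subst; lia).
  assert (Nbc : b' <> c0) by (intro; subst; lia).
  assert (Dab : D adj a b' = 2) by (apply D2 with a'; auto).
  assert (Dac : D adj a c0 = 2) by (apply D2 with a'; auto).
  assert (Dbc : D adj b' c0 = 2) by (apply D2 with a'; auto; apply Hsym; auto).
  assert (m1 : a' = m).
  { apply U. rewrite !int_iff. rewrite Dab, Dac, Dbc.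
    rewrite (D_adj a a'), (D_adj a' b'), (D_adj b' a'), (D_adj a' c0); auto. apply Hsym; auto. }
  assert (m2 : b = m).
  { apply U. rewrite !int_iff. rewrite Dab, Dac, Dbc.
    rewrite (D_adj a b), (D_adj b b'), (D_adj b' b), (D_adj b c0); auto; apply Hsym; auto. }
  congruence.
Qed.

Lemma transfer k : forall u v a b, adj u v -> adj a b -> D adj a u = k -> D adj b v = k ->
  D adj a v = S k -> D adj b u = S k -> forall y, D adj y u < D adj y v -> D adj y a < D adj y b.
Proof.
  induction k as [|k IH]; intros u v a b Huv Hab Hau Hbv Hav Hbu y Hy.
  - apply D_0 in Hau, Hbv. subst. auto.
  - destruct (D_step _ _ _ Hau) as [a' [Haa' Ha'u]].
    assert (Ha'v : D adj a' v = S k).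
    { pose proof (D_tri a' u v). pose proof (D_tri a a' v). rewrite (D_adj _ _ Huv) in H.
      rewrite (D_adj _ _ Haa') in H0. lia. }
    assert (N2 : a' <> b) by (intro; subst; lia).
    destruct (quad v a' b a (S k)) as [b' [Hb1 [Hb2 Hb3]]]; auto.
    { rewrite D_sym; auto. } { rewrite D_sym; auto. } { apply Hsym; auto. } { apply Hsym; auto. }
    { rewrite D_sym; auto. }
    assert (Hb'u : D adj b' u = S k).
    { pose proof (D_tri b b' u). pose proof (D_tri b' a' u). rewrite (D_adj _ _ Hb2) in H.
      rewrite (D_adj _ _ (Hsym _ _ Hb1)) in H0. lia. }
    assert (Hb'v : D adj b' v = k) by (rewrite D_sym; lia).
    pose proof (IH u v a' b' Huv Hb1 Ha'u Hb'v Ha'v Hb'u y Hy) as IHy.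
    apply (square a a' b' b); auto. apply Hsym; auto. apply Hsym; auto.
    intro; subst; lia.
Qed.

Lemma hs_iff h u v : (forall x, h x <-> exists du dv, dist adj x u du /\ dist adj x v dv /\ du < dv) ->
  forall x, h x <-> D adj x u < D adj x v.
Proof.
  intros H x. rewrite H. split.
  - intros [du [dv [H1 [H2 H3]]]]. apply D_of_dist in H1, H2. lia.
  - intros H1. exists (D adj x u), (D adj x v). split; [apply dist_D|]. split; [apply dist_D|]. auto.
Qed.

Lemma hs_edge h a b : halfspace adj h -> h a -> ~ h b -> adj a b ->
  forall y, h y <-> D adj y a < D adj y b.
Proof.
  intros [u [v [Huv Hh]]] Ha Hb Hab. pose proof (hs_iff _ _ _ Hh) as Hi.
  rewrite Hi in Ha, Hb.
  pose proof (E2 _ _ a Huv). pose proof (E2 _ _ b Huv). pose proof (E2 _ _ u Hab). pose proof (E2 _ _ v Hab).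
  pose proof (D_sym a u). pose proof (D_sym a v). pose proof (D_sym b u). pose proof (D_sym b v).
  pose proof (D_tri a b v). rewrite (D_adj _ _ Hab) in H7.
  intros y. rewrite Hi. split.
  - apply (transfer (D adj a u) u v a b); auto; lia.
  - intros Hy. destruct (le_lt_dec (D adj y v) (D adj y u)) as [Hc|Hc].
    + exfalso. pose proof (E2 _ _ y Huv).
      assert (D adj y v < D adj y u) by lia.
      pose proof (transfer (D adj a u) v u b a (Hsym _ _ Huv) (Hsym _ _ Hab)) as T.
      assert (D adj y b < D adj y a) by (apply T; auto; lia). lia.
    + pose proof (E2 _ _ y Huv). lia.
Qed.

Lemma hs_nonempty h : halfspace adj h -> nonempty h /\ nonempty (compl h).
Proof.
  intros [u [v [Huv Hh]]]. pose proof (hs_iff _ _ _ Hh) as Hi. split.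
  - exists u. rewrite Hi, D_refl, D_adj; auto.
  - exists v. unfold compl. rewrite Hi, D_refl. lia.
Qed.

End G.

Section Sets.
Context {V : Type}.
Implicit Types a h k c : vset V.

Lemma hat_not_both a h : nonempty a -> nonempty (compl a) ->
  hat_sub a h -> hat_sub a (compl h) -> False.
Proof.
  intros [x Hx] [y Hy] [[S1 T1]|[S1 T1]] [[S2 T2]|[S2 T2]].
  - exact (S2 x Hx (S1 x Hx)).
  - apply T2. intros z Hz Hz'. exact (Hz (S1 z Hz')).
  - apply T1. intros z Hz Hz'. exact (S2 z Hz' Hz).
  - exact (S2 y Hy (S1 y Hy)).
Qed.

Lemma hat_tr1 a h : hat_sub a h -> transverse (compl h) a -> False.
Proof.
  intros [[S1 _]|[S1 _]] [[x [Hx1 Hx2]] [[y [Hy1 Hy2]] _]].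
  - exact (Hx1 (S1 x Hx2)).
  - exact (Hy1 (S1 y Hy2)).
Qed.

Lemma hat_tr2 a h : hat_sub a (compl h) -> transverse h a -> False.
Proof.
  intros [[S1 _]|[S1 _]] [[x [Hx1 Hx2]] [[y [Hy1 Hy2]] _]].
  - exact (S1 x Hx2 Hx1).
  - exact (S1 y Hy2 Hy1).
Qed.

Lemma hat_mono a h k : hat_sub a h -> subset h k -> hat_sub a k.
Proof.
  intros [[S1 T1]|[S1 T1]] Hk; [left|right]; split.
  - intros x Hx; auto.
  - intros Hka. apply T1. intros x Hx; auto.
  - intros x Hx; auto.
  - intros Hka. apply T1. intros x Hx; auto.
Qed.

Lemma tr_up h c k : transverse h c -> subset h k -> transverse k c \/ hat_sub c k.
Proof.
  intros [[x1 [A1 B1]] [[x2 [A2 B2]] _]] Hk.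
  destruct (classic (nonempty (fun x => compl k x /\ c x))) as [N1|N1].
  - destruct (classic (nonempty (fun x => compl k x /\ compl c x))) as [N2|N2].
    + left. split; [exists x1; auto|]. split; [exists x2; auto|]. split; auto.
    + right. right. split.
      * intros x Hx. apply NNPP. intro Hn. apply N2. exists x; auto.
      * intros Hs. exact (Hs x1 (Hk x1 A1) B1).
  - right. left. split.
    + intros x Hx. apply NNPP. intro Hn. apply N1. exists x; auto.
    + intros Hs. exact (B2 (Hs x2 (Hk x2 A2))).
Qed.

End Sets.

Lemma beta_hat {V} (adj : V -> V -> Prop) h1 h2 h : beta adj h1 h2 h -> hat_sub h1 h \/ hat_sub h2 h.
Proof. intros [_ [[A _]|[[A _]|[A _]]]]; auto. Qed.

Lemma chain_walk {V} (adj : V -> V -> Prop) (HX : median_graph adj) x y n0 :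
  walk adj x y n0 -> forall f : nat -> vset V, (forall n, halfspace adj (f n)) ->
  (forall m n, m <= n -> subset (f n) (f m)) -> (forall n, f n x) -> (forall n, ~ f n y) ->
  exists N, forall n, N <= n -> seteq (f n) (f N).
Proof.
  induction 1 as [x|x z y n1 Hxz W IH]; intros f Hh Hm Hx Hy.
  - exfalso. exact (Hy 0 (Hx 0)).
  - destruct (classic (forall n, f n z)) as [Hz|Hz].
    + apply IH; auto.
    + apply not_all_ex_not in Hz as [n0 Hn0]. exists n0. intros n Hn w.
      assert (~ f n z) by (intro; apply Hn0; apply (Hm n0 n); auto).
      rewrite (hs_edge adj HX (f n) x z (Hh n) (Hx n) H Hxz w).
      rewrite (hs_edge adj HX (f n0) x z (Hh n0) (Hx n0) Hn0 Hxz w). tauto.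
Qed.

Theorem lemma3 (V : Type) (adj : V -> V -> Prop)
  (HX : median_graph adj) (Hfd : finite_dimensional adj)
  (h1 h2 : vset V)
  (Hh1 : halfspace adj h1) (Hh2 : halfspace adj h2)
  (H12 : ssubset h1 (compl h2)) :
  consistent adj (beta adj h1 h2) /\ dcc (beta adj h1 h2).
Proof.
  destruct (hs_nonempty adj HX h1 Hh1) as [N1 N1'].
  destruct (hs_nonempty adj HX h2 Hh2) as [N2 N2'].
  split; [split|].
  - intros h [_ Bh] [_ Bc].
    destruct Bh as [[A1 A2]|[[A1 A2]|[A1 A2]]]; destruct Bc as [[C1 C2]|[[C1 C2]|[C1 C2]]];
      first [ exact (hat_not_both _ _ N1 N1' A1 C1)
            | exact (hat_not_both _ _ N2 N2' A1 C1)
            | exact (hat_not_both _ _ N2 N2' A1 C2)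
            | exact (hat_not_both _ _ N1 N1' A1 C2)
            | exact (hat_tr1 _ _ A1 C2)
            | exact (hat_tr2 _ _ C1 A2) ].
  - intros h k [_ Bh] Hk Hs. split; auto.
    destruct Bh as [[A1 A2]|[[A1 A2]|[A1 A2]]].
    + destruct (tr_up _ _ _ A2 Hs) as [T|T].
      * left; split; auto. eapply hat_mono; eauto.
      * right; right; split; auto. eapply hat_mono; eauto.
    + destruct (tr_up _ _ _ A2 Hs) as [T|T].
      * right; left; split; auto. eapply hat_mono; eauto.
      * right; right; split; auto. eapply hat_mono; eauto.
    + right; right; split; eapply hat_mono; eauto.
  - intros f Hf Hd.
    assert (Hm : forall m n, m <= n -> subset (f n) (f m)).
    { intros m n Hmn. induction Hmn. intros z; auto. intros z Hz. apply IHHmn, Hd, Hz. }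
    assert (Hh : forall n, halfspace adj (f n)) by (intro n; apply (Hf n)).
    assert (Hx : exists x, forall n, f n x).
    { apply NNPP. intro Hno.
      destruct N1 as [x1 X1], N1' as [x2 X2], N2 as [x3 X3], N2' as [x4 X4].
      assert (G : forall x, exists n, ~ f n x).
      { intros x. apply not_all_ex_not. intro; apply Hno; eauto. }
      destruct (G x1) as [n1 G1], (G x2) as [n2 G2], (G x3) as [n3 G3], (G x4) as [n4 G4].
      set (N := n1 + n2 + n3 + n4).
      assert (K : forall i x, i <= N -> ~ f i x -> ~ f N x).
      { intros i x Hi Hn HN. apply Hn. apply (Hm i N Hi). auto. }
      apply K in G1, G2, G3, G4; try (unfold N; lia).
      destruct (beta_hat adj _ _ _ (Hf N)) as [[[S _]|[S _]]|[[S _]|[S _]]]; eauto. }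
    destruct Hx as [x Hx].
    destruct (hs_nonempty adj HX (f 0) (Hh 0)) as [_ [y Hy]].
    assert (Hy' : forall n, ~ f n y) by (intros n Hn; apply Hy, (Hm 0 n); auto; lia).
    destruct (proj1 (proj2 (proj2 HX)) x y) as [n0 W].
    exact (chain_walk adj HX x y n0 W f Hh Hm Hx Hy').
Qed.
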